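(* For all integers $m\ge 2$ and $n\ge 1$, the stacked prism $Y_{2^m,n}$ is odd prime.
   Context: All graphs are finite and simple. A graph $G$ of order $N$ is odd prime if there is a bijection $\ell:V(G)\to\{1,3,\ldots,2N-1\}$ with $\gcd(\ell(u),\ell(v))=1$ for every edge $uv$. For $k\ge 3$, $n\ge 1$, the stacked prism $Y_{k,n}$ is the Cartesian product $C_k\,\square\,P_n$ of a $k$-cycle and a path on $n$ vertices: vertices $v_{i,j}$ ($1\le i\le n$, $1\le j\le k$), with edges $v_{i,j}v_{i,j+1}$ ($1\le j\le k-1$), $v_{i,k}v_{i,1}$ for each $i$, and $v_{i,j}v_{i+1,j}$ for $1\le i\le n-1$, $1\le j\le k$. *)

(* Defs.v *)
From mathcomp Require Import all_boot.
Set Implicit Arguments. Unset Strict Implicit. Unset Printing Implicit Defensive.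

Definition simple_graph (T : finType) (e : rel T) : Prop :=
  symmetric e /\ irreflexive e.

Definition odd_prime_labeling (T : finType) (e : rel T) (l : T -> nat) : Prop :=
  [/\ injective l,
      (forall v, odd (l v) /\ l v < 2 * #|T|),
      (forall x, odd x -> x < 2 * #|T| -> exists v, l v = x) &
      (forall u v, e u v -> coprime (l u) (l v))].

Definition odd_prime (T : finType) (e : rel T) : Prop :=
  exists l : T -> nat, odd_prime_labeling e l.

(* Stacked prism Y_{k,n} = C_k □ P_n; vertex (i,j) with i : 'I_n (layer),
   j : 'I_k (position on the cycle); 0-indexed version of v_{i+1,j+1}. *)
Definition cyc_adj (k : nat) (a b : 'I_k) : bool :=
  (b == (a + 1) %% k :> nat) || (a == (b + 1) %% k :> nat).

Definition path_adj (n : nat) (a b : 'I_n) : bool :=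
  (b == a.+1 :> nat) || (a == b.+1 :> nat).

Definition prism_adj (k n : nat) : rel ('I_n * 'I_k) :=
  fun x y => ((x.1 == y.1) && cyc_adj x.2 y.2) || ((x.2 == y.2) && path_adj x.1 y.1).

Arguments prism_adj k n : clear implicits.

(* Main.v *)
Require Import Defs.
From mathcomp Require Import all_boot zify.

Definition piv (k j : nat) : nat :=
  if j < k./2 then j.*2 else (k - 1 - j).*2.+1.
Definition pinv (k p : nat) : nat :=
  if odd p then k - 1 - p./2 else p./2.

Lemma cop_pow t a : odd a -> coprime a (a + 2 ^ t).
Proof.
move=> oa; rewrite /coprime gcdnDl; case: t => [|t].
  by rewrite expn0 gcdn1.
by rewrite -/(coprime a _) coprime_pexpr // coprimen2.
Qed.

Lemma piv_lt k j : ~~ odd k -> j < k -> piv k j < k.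
Proof. rewrite /piv => ek jk; have := odd_double_half k; rewrite (negbTE ek) => hk; case: ifP => h; lia. Qed.

Lemma pinvK k j : ~~ odd k -> j < k -> pinv k (piv k j) = j.
Proof.
rewrite /piv /pinv => ek jk; have := odd_double_half k; rewrite (negbTE ek) => hk.
case: (ltnP j k./2) => h.
  by rewrite odd_double doubleK.
by rewrite /= odd_double /= uphalf_double; lia.
Qed.

Lemma pivK k p : ~~ odd k -> p < k -> piv k (pinv k p) = p.
Proof.
rewrite /piv /pinv => ek pk; have := odd_double_half p; have := odd_double_half k; rewrite (negbTE ek) => hk.
case: (odd p) => /= hp; case: ifP => h; lia.
Qed.

Lemma piv_adj k a : ~~ odd k -> 2 <= k -> a < k ->
  (piv k ((a + 1) %% k) + 1 = piv k a \/ piv k ((a + 1) %% k) + 2 = piv k a \/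
   piv k a + 1 = piv k ((a + 1) %% k) \/ piv k a + 2 = piv k ((a + 1) %% k)).
Proof.
move=> ek k2 ak; have := odd_double_half k; rewrite (negbTE ek) => hk; case: (ltnP (a + 1) k) => h.
  rewrite modn_small // /piv.
  case: ifP => h1; case: ifP => h2; lia.
have -> : a + 1 = k by lia.
rewrite modnn /piv; case: ifP => h1; case: ifP => h2; lia.
Qed.

Lemma cop_diff a b : odd a -> (a + 2 = b \/ a + 4 = b) -> coprime a b.
Proof.
move=> oa [<-|<-]; first by have := cop_pow 1 a oa; rewrite expn1.
by have := cop_pow 2 a oa.
Qed.

Theorem theorem3p9 (m n : nat) : 2 <= m -> 1 <= n ->
  @odd_prime _ (prism_adj (2 ^ m) n).
Proof.
move=> m2 n1.
set k := 2 ^ m.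
have ek : ~~ odd k by rewrite /k oddX; case: (m) m2.
have k2 : 2 <= k by have := @leq_pexp2l 2 1 m isT (ltnW m2).
have k0 : 0 < k by lia.
pose l (x : 'I_n * 'I_k) := 2 * (x.1 * k + piv k x.2) + 1.
exists l; split.
- move=> [i j] [i' j']; rewrite /l /= => E.
  have E' : i * k + piv k j = i' * k + piv k j' by lia.
  have pj := piv_lt _ _ ek (ltn_ord j); have pj' := piv_lt _ _ ek (ltn_ord j').
  have Hi : (i * k + piv k j) %/ k = i by rewrite divnMDl // divn_small // addn0.
  have Hi' : (i' * k + piv k j') %/ k = i' by rewrite divnMDl // divn_small // addn0.
  have Hj : (i * k + piv k j) %% k = piv k j by rewrite modnMDl modn_small.
  have Hj' : (i' * k + piv k j') %% k = piv k j' by rewrite modnMDl modn_small.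
  have ei : i = i' :> nat by rewrite -Hi -Hi' E'.
  have ej : piv k j = piv k j' by rewrite -Hj -Hj' E'.
  have ej2 : j = j' :> nat by rewrite -(pinvK _ _ ek (ltn_ord j)) ej pinvK.
  by congr pair; apply: val_inj.
- move=> [i j]; rewrite /l /= card_prod !card_ord; split.
    by rewrite addn1 /= mul2n odd_double.
  have pj := piv_lt _ _ ek (ltn_ord j); have hi := ltn_ord i.
  have : (i * k + piv k j) < n * k.
    apply: (@leq_trans (i * k + k)); first by rewrite ltn_add2l.
    have : i.+1 * k <= n * k by rewrite leq_mul2r hi orbT.
    by rewrite mulSn addnC.
  lia.
- move=> x ox; rewrite card_prod !card_ord => xl.
  set q := x./2.
  have xq : x = 2 * q + 1 by have := odd_double_half x; rewrite ox /q; lia.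
  have qlt : q < n * k by lia.
  have hi : q %/ k < n by rewrite ltn_divLR.
  have hp : q %% k < k by rewrite ltn_mod.
  have hj : pinv k (q %% k) < k.
    rewrite /pinv; case: ifP => _; lia.
  exists (Ordinal hi, Ordinal hj); rewrite /l /= pivK //.
  by rewrite -divn_eq.
- move=> [i j] [i' j']; rewrite /prism_adj /l /=.
  have oddl : forall u, odd (2 * u + 1) by move=> u; rewrite addn1 /= mul2n odd_double.
  case/orP => /andP [/eqP E H].
  + rewrite E; move: H; rewrite /cyc_adj => /orP [] /eqP H.
    * have := piv_adj _ _ ek k2 (ltn_ord j); rewrite -H.
      case=> [h|[h|[h|h]]].
      - rewrite coprime_sym; apply: cop_diff => //; lia.
      - rewrite coprime_sym; apply: cop_diff => //; lia.
      - apply: cop_diff => //; lia.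
      - apply: cop_diff => //; lia.
    * have := piv_adj _ _ ek k2 (ltn_ord j'); rewrite -H.
      case=> [h|[h|[h|h]]].
      - apply: cop_diff => //; lia.
      - apply: cop_diff => //; lia.
      - rewrite coprime_sym; apply: cop_diff => //; lia.
      - rewrite coprime_sym; apply: cop_diff => //; lia.
  + rewrite E; have kk : 2 * k = 2 ^ m.+1 by rewrite expnS.
    move: H; rewrite /path_adj => /orP [] /eqP H.
    * have -> : 2 * (i' * k + piv k j') + 1 = 2 * (i * k + piv k j') + 1 + 2 ^ m.+1.
        by rewrite -kk H; lia.
      exact: cop_pow.
    * have -> : 2 * (i * k + piv k j') + 1 = 2 * (i' * k + piv k j') + 1 + 2 ^ m.+1.
        by rewrite -kk H; lia.
      rewrite coprime_sym; exact: cop_pow.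
Qed.
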